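(* For any number of buyers $I\ge1$, any $k\ge 1$, $a>0$ and $X>0$, the exponential price mechanism with parameters $(k,a,X)$ guarantees a revenue of $$\sum_{v\in V}p(v)\cdot\min_{0\le n\le I}\left(\frac{a\,v}{k}\sum_{j=n+1}^{I}\frac1j+nX\big((1+1/a)^k-1\big)-(I-n)X\right).$$ Consequently it (for suitable parameters) guarantees any revenue below $\Pi_I^*$, the supremum of this expression over $k\ge1$, $a>0$, $X$.
   Context: Setting: a single good is sold to buyers $\mathcal I=\{1,\ldots,I\}$ who have a common value $v\in V=\{0,\nu,2\nu,\ldots,1\}$ with known prior $p\in\Delta(V)$, and quasi-linear utility. A mechanism consists of finite message sets $M_i$ (with $M=\prod_i M_i$), allocation rules $q_i:M\to[0,1]$ with $\sum_i q_i(m)\le 1$, and payment rules $P_i:M\to\mathbb R$; each $M_i$ contains an opt-out message $0$ with $q_i(0,m_{-i})=P_i(0,m_{-i})=0$ for all $m_{-i}$. Buyer $i$'s utility is $U_i(v,m)=v\,q_i(m)-P_i(m)$. A Bayes correlated equilibrium (BCE) of the mechanism is a $\mu\in\Delta(V\times M)$ with $\sum_m\mu(v,m)=p(v)$ for all $v$ and $\sum_{(v,m_{-i})}\mu(v,m)\big(U_i(v,(m_i,m_{-i}))-U_i(v,(m_i',m_{-i}))\big)\ge 0$ for all $i$ and all $m_i,m_i'\in M_i$. A mechanism guarantees revenue $R$ if every BCE $\mu$ satisfies $\sum_{(v,m)}\sum_i\mu(v,m)P_i(m)\ge R$. Exponential price mechanism (parameters $k\ge1$, $a>0$, $X>0$):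 $M_i=\{0,1,\ldots,k\}$ for all $i$; it is symmetric, i.e. $q_i(m)=q(m_i,m_{-i})$ and $P_i(m)=P(m_i,m_{-i})$ where $q,P$ are invariant under permutations of the entries of $m_{-i}$. The allocation is defined by $q(0,m_{-1})=0$ and, for $0\le m_1\le k-1$, $q(m_1+1,m_{-1})-q(m_1,m_{-1})=\frac1k\cdot\frac{1}{|\mathrm{rank}(m_1,m_{-1})|}\sum_{j\in\mathrm{rank}(m_1,m_{-1})}\frac1j$, where $\mathrm{rank}(m_1,m_{-1})\subseteq\{1,\ldots,I\}$ is the set of positions (counting from the top, ties occupying consecutive positions) that the value $m_1$ occupies in the list $(m_1,\ldots,m_I)$ sorted in decreasing order (e.g. $\mathrm{rank}(20,10,20,40,30)=\{3,4\}$). The payment is $P(m_1,m_{-1})=X\big((1+1/a)^{m_1}-1\big)$. *)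

(* Defs.v *)
From HB Require Import structures.
From mathcomp Require Import all_boot all_order all_algebra.
Set Implicit Arguments. Unset Strict Implicit. Unset Printing Implicit Defensive.
Import Order.TTheory GRing.Theory Num.Theory.
Local Open Scope ring_scope.

Definition profile (I k : nat) := {ffun 'I_I -> 'I_k.+1}.

(* Value grid V = {0, nu, 2nu, ..., 1} with nu = 1/N; index t stands for t/N. *)
Definition vgrid (R : realFieldType) (N : nat) (t : 'I_N.+1) : R := t%:R / N%:R.

Definition is_prior (R : realFieldType) (N : nat) (p : 'I_N.+1 -> R) : Prop :=
  (forall t, 0 <= p t) /\ \sum_t p t = 1.

Definition upd (I k : nat) (m : profile I k) (i : 'I_I) (x : 'I_k.+1) : profile I k :=
  [ffun j => if j == i then x else m j].

Definition util (R : realFieldType) (N I k : nat)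
  (q P : 'I_I -> profile I k -> R) (i : 'I_I) (t : 'I_N.+1) (m : profile I k) : R :=
  vgrid R t * q i m - P i m.

Definition is_BCE (R : realFieldType) (N I k : nat) (p : 'I_N.+1 -> R)
  (q P : 'I_I -> profile I k -> R) (mu : 'I_N.+1 -> profile I k -> R) : Prop :=
  [/\ (forall t m, 0 <= mu t m),
      (forall t, \sum_(m : profile I k) mu t m = p t) &
      (forall (i : 'I_I) (x y : 'I_k.+1),
          0 <= \sum_t \sum_(m : profile I k | m i == x)
                 mu t m * (util q P i t m - util q P i t (upd m i y)))].

Definition guarantees (R : realFieldType) (N I k : nat) (p : 'I_N.+1 -> R)
  (q P : 'I_I -> profile I k -> R) (Rv : R) : Prop :=
  forall mu, is_BCE p q P mu ->
    Rv <= \sum_t \sum_(m : profile I k) mu t m * \sum_i P i m.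

(* rank(m_i, m_{-i}): positions (1-based, from the top) occupied by the value
   m_i in the list of all messages sorted in decreasing order. *)
Definition rank_pos (I k : nat) (m : profile I k) (i : 'I_I) : seq nat :=
  let s := sort (fun x y : nat => (y <= x)%N) [seq val (m j) | j <- enum 'I_I] in
  [seq j <- iota 1 I | nth 0%N s j.-1 == val (m i)].

(* Exponential price mechanism allocation:
   q_i(m) = sum_{t < m_i} (q(t+1, m_{-i}) - q(t, m_{-i})), with q(0, .) = 0. *)
Definition exp_q (R : realFieldType) (I k : nat) (i : 'I_I) (m : profile I k) : R :=
  \sum_(t < k.+1 | (t < m i)%N)
     ((k%:R)^-1 * ((size (rank_pos (upd m i t) i))%:R^-1 *
                   \sum_(j <- rank_pos (upd m i t) i) (j%:R)^-1)).

Definition exp_P (R : realFieldType) (I k : nat) (a X : R) (i : 'I_I) (m : profile I k) : R :=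
  X * ((1 + a^-1) ^+ (m i) - 1).

Definition bound_term (R : realFieldType) (I k : nat) (a X v : R) (n : nat) : R :=
  a * v / k%:R * (\sum_(n.+1 <= j < I.+1) (j%:R)^-1)
  + n%:R * (X * ((1 + a^-1) ^+ k - 1)) - (I - n)%:R * X.

Definition rev_bound (R : realFieldType) (N I k : nat) (a X : R) (p : 'I_N.+1 -> R) : R :=
  \sum_t p t * \big[Order.min/bound_term I k a X (vgrid R t) 0%N]_(n < I.+1)
                  bound_term I k a X (vgrid R t) n.

(* Main.v *)
Require Import Defs.
From HB Require Import structures.
From mathcomp Require Import all_boot all_order all_algebra.
From mathcomp Require Import ring.
Import Order.TTheory GRing.Theory Num.Theory.
Local Open Scope ring_scope.


Lemma sorted_split (k : nat) (s : seq nat) :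
  sorted (fun x y : nat => (y <= x)%N) s -> all (fun x => x <= k)%N s ->
  exists s', s = nseq (count_mem k s) k ++ s' /\ all (fun x => x < k)%N s'.
Proof.
elim: s => [|x t IH] /=; first by move=> _ _; exists [::].
move=> Hs /andP[Hx Ht].
have Hst := path_sorted Hs.
have Htr : transitive (fun x y : nat => (y <= x)%N).
  by move=> a b c H1 H2; exact: leq_trans H2 H1.
have Hall := order_path_min Htr Hs.
case: (eqVneq x k) => [Exk|Hxk].
  have [s' [E H]] := IH Hst Ht; exists s'; split => //.
  by rewrite Exk {1}E.
have Hxk' : (x < k)%N by rewrite ltn_neqAle Hxk Hx.
exists (x :: t); split.
  have -> : count_mem k t = 0%N.
    apply/eqP; rewrite -leqn0 leqNgt -has_count; apply/hasPn => y Hy /=.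
    move/allP: Hall => /(_ y Hy) /= Hyx; apply/negP => /eqP E.
    by move: Hyx; rewrite E leqNgt Hxk'.
  by [].
rewrite /= Hxk' /=; apply/allP => y Hy.
by move/allP: Hall => /(_ y Hy) /= Hyx; exact: leq_ltn_trans Hyx Hxk'.
Qed.

Lemma sum_const_count (R : realFieldType) (I : nat) (P : pred 'I_I) (c : R) :
  \sum_(i | P i) c = c *+ count P (enum 'I_I).
Proof. by rewrite big_const_seq enumT; elim: (count _ _) => //= n ->; rewrite mulrS. Qed.

Lemma rank_sum (R : realFieldType) (I k : nat) (m : profile I k) :
  \sum_(i | (m i < k)%N)
     ((size (rank_pos m i))%:R^-1 * \sum_(j <- rank_pos m i) (j%:R)^-1)
  = \sum_(j <- index_iota (count (fun i => val (m i) == k) (enum 'I_I)).+1 I.+1)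
       (j%:R)^-1 :> R.
Proof.
rewrite /rank_pos.
set s := sort _ _.
have Hsz : size s = I by rewrite size_sort size_map size_enum_ord.
have Hmap : [seq nth 0%N s j.-1 | j <- iota 1 I] = s.
  rewrite -[in RHS](mkseq_nth 0%N s) Hsz /mkseq.
  by rewrite (iotaDl 1 0) -map_comp.
have Hcnt w : count (fun j => nth 0%N s j.-1 == w) (iota 1 I)
            = count (fun i => val (m i) == w) (enum 'I_I).
  have -> : count (fun j => nth 0%N s j.-1 == w) (iota 1 I)
          = count (pred1 w) [seq nth 0%N s j.-1 | j <- iota 1 I].
    by rewrite count_map.
  rewrite Hmap.
  have := permEl (perm_sort (fun x y : nat => (y <= x)%N) [seq val (m j) | j <- enum 'I_I]).
  by move/permP => ->; rewrite count_map.
under eq_bigr => i _ do rewrite size_filter Hcnt big_filter big_mkcond mulr_sumr.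
rewrite exchange_big /=.
set n := count _ (enum 'I_I).
transitivity (\sum_(j <- iota 1 I) (if (nth 0%N s j.-1 < k)%N then (j%:R)^-1 else 0) : R).
  apply: eq_big_seq => j Hj.
  set w := nth 0%N s j.-1.
  have Cpos : (0 < count (fun i => \val (m i) == w) (enum 'I_I))%N.
    by rewrite -Hcnt -has_count; apply/hasP; exists j.
  rewrite (eq_bigr (fun i => if (\val (m i) == w) then
      (count (fun i => \val (m i) == w) (enum 'I_I))%:R^-1 * (j%:R)^-1 else 0)); last first.
    move=> i _.
    rewrite [w == _]eq_sym; case: eqP => [E|_]; last by rewrite mulr0.
    by rewrite E.
  rewrite -big_mkcondr /=.
  case: ltnP => Hwk.
    rewrite (eq_bigl (fun i => \val (m i) == w)); last first.
      by move=> i /=; case E: (\val (m i) == w); rewrite ?andbF ?andbT // (eqP E) Hwk.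
    rewrite sum_const_count; move: Cpos; set C := count _ _ => Cpos.
    rewrite -[_ *+ C]mulr_natr mulrAC mulVf ?mul1r //.
    by rewrite pnatr_eq0 -lt0n.
  rewrite big1 // => i /andP[Hi /eqP Ei]; move: Hi; rewrite Ei ltnNge Hwk.
  done.
have Hn : count_mem k s = n.
  by rewrite -Hmap count_map; exact: Hcnt k.
have Hsorted : sorted (fun x y : nat => (y <= x)%N) s.
  by apply: sort_sorted => x y; exact: leq_total.
have Hallk : all (fun x => x <= k)%N s.
  apply/allP => y; rewrite mem_sort => /mapP [i _ ->]; exact: (ltn_ord (m i)).
have [s' [Es Hs']] := @sorted_split k s Hsorted Hallk.
rewrite Hn in Es.
have Hsz' : size s' = (I - n)%N.
  by rewrite -Hsz Es size_cat size_nseq addKn.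
have HnI : (n <= I)%N by rewrite -Hsz Es size_cat size_nseq leq_addr.
rewrite -{1}(subnKC HnI) iotaD big_cat /=.
rewrite big1_seq ?add0r; last first.
  move=> j /andP[_]; rewrite mem_iota => /andP[H1 H2].
  rewrite Es nth_cat size_nseq.
  have Hj : (j.-1 < n)%N by rewrite -ltnS prednK // -add1n.
  by rewrite Hj nth_nseq Hj ltnn.
rewrite /index_iota subSS add1n.
apply: eq_big_seq => j; rewrite mem_iota => /andP[H1 H2].
rewrite Es nth_cat size_nseq.
have Hj : (n <= j.-1)%N by rewrite -ltnS prednK // (leq_trans _ H1).
have Hj' := Hj; rewrite (leqNgt n) in Hj'; rewrite (negbTE Hj').
have Hin : nth 0%N s' (j.-1 - n) \in s'.
  apply: mem_nth; rewrite Hsz' ltn_subLR //.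
  by rewrite -ltnS prednK ?(leq_trans _ H1) // addSn.
by move/allP: Hs' => /(_ _ Hin) /= ->.
Qed.

Lemma upd_same (I k : nat) (m : profile I k) i : upd m i (m i) = m.
Proof. by apply/ffunP => j; rewrite ffunE; case: eqP => // ->. Qed.
Lemma upd_upd (I k : nat) (m : profile I k) i x y : upd (upd m i x) i y = upd m i y.
Proof. by apply/ffunP => j; rewrite !ffunE; case: eqP. Qed.
Lemma upd_at (I k : nat) (m : profile I k) i x : upd m i x i = x.
Proof. by rewrite ffunE eqxx. Qed.

Definition Dq (R : realFieldType) {I k : nat} (m : profile I k) i : R :=
  (k%:R)^-1 * ((size (rank_pos m i))%:R^-1 * \sum_(j <- rank_pos m i) (j%:R)^-1).

Lemma q_step (R : realFieldType) (I k : nat) (m : profile I k) i (y : 'I_k.+1) :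
  val y = (m i).+1 -> @exp_q R I k i (upd m i y) - @exp_q R I k i m = Dq R m i.
Proof.
move=> Hy; rewrite /exp_q upd_at Hy.
under eq_bigr => t _ do rewrite upd_upd.
rewrite (bigD1 (m i)) //= upd_same addrAC.
rewrite (eq_bigl (fun t : 'I_k.+1 => (t < m i)%N) (P1 := fun t : 'I_k.+1 => (t < (m i).+1)%N && (t != m i))); first by rewrite addrNK.
by move=> t /=; rewrite ltnS ltn_neqAle andbC.
Qed.


Lemma ic_sum (R : realFieldType) (N I k : nat) (a X : R) (p : 'I_N.+1 -> R) mu i :
  0 < a -> @is_BCE R N I k p (@exp_q R I k) (@exp_P R I k a X) mu ->
  0 <= \sum_t \sum_(m : profile I k | (m i < k)%N)
         mu t m * ((@exp_P R I k a X i m + X) / a - vgrid R t * Dq R m i).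
Proof.
move=> ha [_ _ HIC].
under eq_bigr => t _ do rewrite (partition_big (fun m : profile I k => m i) (fun x : 'I_k.+1 => (x < k)%N)) //.
rewrite exchange_big /=; apply: sumr_ge0 => x hx.
have hy : (x.+1 < k.+1)%N by [].
apply: (le_trans (HIC i x (Ordinal hy))).
rewrite le_eqVlt; apply/orP; left; apply/eqP.
apply: eq_bigr => t _; apply: eq_big => [m|m Hm].
  by case E: (m i == x); rewrite ?andbF ?andbT // (eqP E) hx.
have Hq := @q_step R I k m i (Ordinal hy) (esym (congr1 S (f_equal val (eqP Hm)))).
congr (_ * _); rewrite /util -Hq /exp_P upd_at (eqP Hm) /= exprS.
have ha0 : a != 0 by rewrite gt_eqF.
field.
exact: ha0.
Qed.

Lemma pointwise (R : realFieldType) (I k : nat) (a X v : R) (m : profile I k) :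
  0 < a ->
  \sum_i @exp_P R I k a X i m =
  bound_term I k a X v (count (fun i => val (m i) == k) (enum 'I_I))
  + \sum_(i | (m i < k)%N) (@exp_P R I k a X i m + X - a * v * Dq R m i).
Proof.
move=> ha.
set n := count _ _.
have Hge : count (fun i => ~~ (m i < k)%N) (enum 'I_I) = n.
  rewrite /n; apply: eq_count => i /=.
  case: (m i) => x hx /=; rewrite ltnS in hx; by rewrite eqn_leq hx /= -leqNgt.
have Hlt : count (fun i => (m i < k)%N) (enum 'I_I) = (I - n)%N.
  have E := count_predC (fun i => (m i < k)%N) (enum 'I_I).
  rewrite size_enum_ord in E; rewrite -Hge.
  have Hs : forall x y z : nat, (x + y)%N = z -> x = (z - y)%N by move=> x y z <-; rewrite addnK.
  exact: Hs E.
have HnI : (n <= I)%N by rewrite -Hge -[X in (_ <= X)%N](size_enum_ord I) count_size.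
rewrite (bigID (fun i => (m i < k)%N)) /=.
rewrite (eq_bigr (fun _ => X * ((1 + a^-1) ^+ k - 1)) (P := fun i => ~~ (m i < k)%N)); last first.
  move=> i Hi; rewrite /exp_P.
  have -> : (m i : nat) = k.
    by apply/eqP; have := ltn_ord (m i); rewrite ltnS => Hm; rewrite eqn_leq Hm /= leqNgt.
  by [].
rewrite sum_const_count Hge.
rewrite big_split /= big_split /= sumrN sum_const_count Hlt.
rewrite -mulr_sumr.
rewrite /Dq.
have E : \sum_(i | (m i < k)%N) a * v * (k%:R^-1 * ((size (rank_pos m i))%:R^-1 * \sum_(j <- rank_pos m i) (j%:R)^-1))
  = a * v * (k%:R^-1 * \sum_(j <- index_iota n.+1 I.+1) (j%:R)^-1) :> R.
  by rewrite -rank_sum !mulr_sumr.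
rewrite E /bound_term.
rewrite -[X *+ (I - n)]mulr_natr -[X * ((1 + a^-1) ^+ k - 1) *+ n]mulr_natr natrB //.
set H := \sum_(j <- _) _.
set S := \sum_(i | _) _.
ring.
Qed.

Theorem proposition1 (R : realFieldType) (N I : nat) (p : 'I_N.+1 -> R) :
  (0 < N)%N -> (0 < I)%N -> @is_prior R N p ->
  (forall (k : nat) (a X : R), (0 < k)%N -> 0 < a -> 0 < X ->
     @guarantees R N I k p (@exp_q R I k) (@exp_P R I k a X)
                 (@rev_bound R N I k a X p))
  /\
  (forall Rv : R,
     (exists (k : nat) (a X : R),
        [/\ (0 < k)%N, 0 < a, 0 < X & Rv < @rev_bound R N I k a X p]) ->
     exists (k : nat) (a X : R),
        [/\ (0 < k)%N, 0 < a, 0 < X &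
            @guarantees R N I k p (@exp_q R I k) (@exp_P R I k a X) Rv]).
Proof.
move=> hN hI [hp0 hp1].
have main : forall (k : nat) (a X : R), (0 < k)%N -> 0 < a -> 0 < X ->
     @guarantees R N I k p (@exp_q R I k) (@exp_P R I k a X)
                 (@rev_bound R N I k a X p).
  move=> k a X hk ha hX mu Hmu.
  have [Hmu0 Hmup _] := Hmu.
  pose nm (m : profile I k) := count (fun i => val (m i) == k) (enum 'I_I).
  pose S := \sum_i \sum_t \sum_(m : profile I k | (m i < k)%N)
         mu t m * ((@exp_P R I k a X i m + X) / a - vgrid R t * Dq R m i).
  have S0 : 0 <= S by apply: sumr_ge0 => i _; exact: ic_sum ha Hmu.
  have E : \sum_t \sum_(m : profile I k) mu t m * \sum_i @exp_P R I k a X i m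
    = \sum_t \sum_(m : profile I k) mu t m * bound_term I k a X (vgrid R t) (nm m) + a * S.
    have E2 : forall t, \sum_(m : profile I k) mu t m * \sum_(i | (m i < k)%N)
        (@exp_P R I k a X i m + X - a * vgrid R t * Dq R m i)
      = \sum_i \sum_(m : profile I k | (m i < k)%N)
        a * (mu t m * ((@exp_P R I k a X i m + X) / a - vgrid R t * Dq R m i)).
      move=> t.
      under [RHS]eq_bigr => i _ do rewrite big_mkcond.
      rewrite [RHS]exchange_big; apply: eq_bigr => m _.
      rewrite mulr_sumr big_mkcond; apply: eq_bigr => i _.
      case: ifP => _; last by [].
      have ha0 : a != 0 by rewrite gt_eqF.
      by field.
    transitivity (\sum_t \sum_(m : profile I k)
       (mu t m * bound_term I k a X (vgrid R t) (nm m) +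
        mu t m * \sum_(i | (m i < k)%N)
        (@exp_P R I k a X i m + X - a * vgrid R t * Dq R m i))).
      apply: eq_bigr => t _; apply: eq_bigr => m _.
      by rewrite (pointwise R I k a X (vgrid R t) m ha) mulrDr.
    under eq_bigr => t _ do rewrite big_split.
    rewrite big_split /=; congr (_ + _).
    rewrite /S mulr_sumr.
    under [RHS]eq_bigr => i _ do rewrite mulr_sumr.
    rewrite [RHS]exchange_big; apply: eq_bigr => t _; rewrite E2.
    by apply: eq_bigr => i _; rewrite mulr_sumr.
  rewrite E -[X in X <= _]addr0; apply: lerD; last exact: mulr_ge0 (ltW ha) S0.
  rewrite /rev_bound; apply: ler_sum => t _.
  rewrite -Hmup mulr_suml; apply: ler_sum => m _.
  apply: ler_wpM2l; first exact: Hmu0.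
  have Hn : (nm m < I.+1)%N by rewrite ltnS -[X in (_ <= X)%N](size_enum_ord I) count_size.
  exact: (bigmin_le _ (Ordinal Hn) (fun n : 'I_I.+1 => bound_term I k a X (vgrid R t) n)).
split=> // Rv [k [a [X [hk ha hX HR]]]].
exists k, a, X; split=> // mu Hmu.
exact: le_trans (ltW HR) (main k a X hk ha hX mu Hmu).
Qed.
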